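(* Let $K\colon\mathbb{E}(D)\to\mathbb{E}(D)$ be an affine function and $u\colon D\to[0,\infty)$. If $\mathsf{D}K$ has a $u$-ranking supermartingale, then $\inf_n(\mathsf{D}K)^n(u)=\mathbb{O}$.
   Context: $\mathbb{E}(D)$ is the set of functions $D\to[0,\infty]$ with pointwise order and operations ($\infty+x=\infty$, $0\cdot\infty=0$, $r\cdot\infty=\infty$ for $r>0$); $\mathbb{O}$ is the constant zero function; for $x\ge y$ in $[0,\infty]$, $x-y$ is the least $z$ with $x=y+z$. $K$ is affine if $K(\alpha\eta_1+(1-\alpha)\eta_2)=\alpha K(\eta_1)+(1-\alpha)K(\eta_2)$ for all $\eta_1,\eta_2$ and $\alpha\in[0,1]$. $(\mathsf{D}K)(\eta)=K(\eta)-K(\mathbb{O})$. A $u$-ranking supermartingale with respect to $\mathsf{D}K$ is a function $r\colon D\to[0,\infty)$ with $(\mathsf{D}K)(r)+u\le r$. *)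

(* Defs.v *)
(* [0,oo] is modelled inside \bar R (extended reals). *)
From HB Require Import structures.
From mathcomp Require Import all_boot all_order all_algebra.
From mathcomp Require Import all_classical all_reals ereal.
Set Implicit Arguments. Unset Strict Implicit. Unset Printing Implicit Defensive.
Import Order.TTheory GRing.Theory Num.Theory.
Local Open Scope ring_scope.
Local Open Scope ereal_scope.

Section Defs.
Variables (R : realType) (D : Type).

Definition isE (eta : D -> \bar R) : Prop := forall d, 0 <= eta d.

Definition zeroE : D -> \bar R := fun _ => 0.

(* K is affine on E(D) (pointwise operations; mathcomp's 0 * +oo = 0) *)
Definition affineE (K : (D -> \bar R) -> (D -> \bar R)) : Prop :=
  forall (eta1 eta2 : D -> \bar R) (a : R), isE eta1 -> isE eta2 ->
    (0 <= a <= 1)%R ->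
    K (fun d => a%:E * eta1 d + (1 - a)%:E * eta2 d)
    = (fun d => a%:E * K eta1 d + (1 - a)%:E * K eta2 d).

(* x - y on [0,oo] for x >= y: the least z with x = y + z.
   If y = +oo (so x = +oo) this is 0; otherwise it is the usual x - y. *)
Definition esubE (x y : \bar R) : \bar R :=
  if y == +oo then 0 else x - y.

Definition DK (K : (D -> \bar R) -> (D -> \bar R)) (eta : D -> \bar R)
  : D -> \bar R := fun d => esubE (K eta d) (K zeroE d).

Definition ranking_supermartingale (K : (D -> \bar R) -> (D -> \bar R))
  (u r : D -> R) : Prop :=
  (forall d, (0 <= r d)%R) /\
  (forall d, DK K (fun x => (r x)%:E) d + (u d)%:E <= (r d)%:E).

End Defs.

(* Main.v *)
Require Import Defs.
From HB Require Import structures.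
From mathcomp Require Import all_boot all_order all_algebra.
From mathcomp Require Import all_classical all_reals ereal.
From mathcomp Require Import ring lra.
Import Order.TTheory GRing.Theory Num.Theory.
Local Open Scope ring_scope.
Local Open Scope classical_set_scope.
Local Open Scope ereal_scope.

Lemma isE_zero (R : realType) (D : Type) : isE (@zeroE R D).
Proof. by []. Qed.

Lemma K_ge_K0 (R : realType) (D : Type) (K : (D -> \bar R) -> (D -> \bar R))
  (HE : forall eta, isE eta -> isE (K eta)) (HA : affineE K)
  (eta : D -> \bar R) (d : D) : isE eta -> K (@zeroE R D) d <= K eta d.
Proof.
move=> Heta.
have key : forall t : R, (1 <= t)%R -> (1 - t^-1)%:E * K (@zeroE R D) d <= K eta d.
  move=> t t1.
  have t0 : (0 < t)%R by apply: lt_le_trans t1.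
  have Ht : isE (fun x => t%:E * eta x).
    by move=> x; apply: mule_ge0; [rewrite lee_fin ltW|apply: Heta].
  have Ha : (0 <= t^-1 <= 1)%R.
    by rewrite invr_ge0 ltW //= invf_le1.
  have := HA _ _ _ Ht (@isE_zero R D) Ha.
  have -> : (fun d0 => (t^-1)%:E * (t%:E * eta d0) + (1 - t^-1)%:E * @zeroE R D d0) = eta.
    apply: funext => x; rewrite /zeroE mule0 adde0 muleA -EFinM mulVf ?mul1e //.
    by rewrite gt_eqF.
  move/(congr1 (fun f => f d)) => ->.
  apply: lee_paddl => //; apply: mule_ge0; first by rewrite lee_fin invr_ge0 ltW.
  exact: HE.
have H0 := HE _ (@isE_zero R D) d.
have H1 := HE _ Heta d.
move: H0 H1 key.
case: (K (@zeroE R D) d) => [k| |] //; case: (K eta d) => [b| |] //.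
- rewrite !lee_fin => k0 b0 key.
  rewrite leNgt; apply/negP => bk.
  have kp : (0 < k)%R by apply: le_lt_trans bk.
  have kb : (0 < k - b)%R by rewrite subr_gt0.
  have t1 : (1 <= 2 * k / (k - b))%R.
    rewrite ler_pdivlMr // mul1r; lra.
  have := key _ t1.
  rewrite lee_fin invf_div.
  have ->: ((1 - (k - b) / (2 * k)) * k = (k + b) / 2)%R.
    by field; rewrite gt_eqF.
  lra.
- by move=> *; rewrite leey.
- move=> _ _ /(_ 2%R ltac:(lra)); rewrite mulry.
  have -> : (Num.sg (1 - 2^-1 : R)) = 1%R.
    by apply/eqP; rewrite sgr_cp0; lra.
  by rewrite mul1e leye_eq => /eqP ->.
Qed.

Section DKfacts.
Variables (R : realType) (D : Type) (K : (D -> \bar R) -> (D -> \bar R)).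
Hypothesis HE : forall eta, isE eta -> isE (K eta).
Hypothesis HA : affineE K.

Let K0 := K (@zeroE R D).

Lemma K0_cases d : K0 d = +oo \/ exists c : R, K0 d = c%:E /\ (0 <= c)%R.
Proof.
have := HE _ (@isE_zero R D) d; rewrite /K0.
case: (K (@zeroE R D) d) => [c| |] //; last by left.
by move=> c0; right; exists c; split => //; rewrite -lee_fin.
Qed.

Lemma DK_inf eta d : K0 d = +oo -> DK K eta d = 0.
Proof. by rewrite /DK /esubE /K0 => ->; rewrite eqxx. Qed.

Lemma DK_fin eta d c : K0 d = c%:E -> DK K eta d = K eta d - c%:E.
Proof. by rewrite /DK /esubE /K0 => ->. Qed.

Arguments DK_fin {eta d c}.

Lemma K_decomp eta d c : K0 d = c%:E -> K eta d = DK K eta d + c%:E.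
Proof. by move=> Hc; rewrite (DK_fin Hc) subeK. Qed.

Arguments K_decomp eta {d c}.

Lemma DK_E eta : isE eta -> isE (DK K eta).
Proof.
move=> He d; case: (K0_cases d) => [Hi|[c [Hc c0]]]; first by rewrite DK_inf.
rewrite (DK_fin Hc) sube_ge0 ?fin_numE //; rewrite -Hc; exact: K_ge_K0.
Qed.

Lemma DK_zero : DK K (@zeroE R D) = @zeroE R D.
Proof.
apply: funext => d; case: (K0_cases d) => [Hi|[c [Hc c0]]]; first by rewrite DK_inf.
by rewrite (DK_fin Hc) -/K0 Hc subee.
Qed.

Let h := ((2:R)^-1)%:E.

Lemma h2 (y : \bar R) : h * (2%:E * y) = y.
Proof. by rewrite /h muleA -EFinM mulVf ?mul1e. Qed.

Lemma isE_half (e1 e2 : D -> \bar R) : isE e1 -> isE e2 -> isE (fun x => h * e1 x + h * e2 x).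
Proof.
move=> H1 H2 x; apply: adde_ge0; apply: mule_ge0 => //; rewrite lee_fin; lra.
Qed.

Lemma isE_double (e : D -> \bar R) : isE e -> isE (fun x => 2%:E * e x).
Proof. move=> H x; apply: mule_ge0 => //; rewrite lee_fin; lra. Qed.

Arguments isE_double {e}.

Lemma DK_half (e1 e2 : D -> \bar R) d : isE e1 -> isE e2 ->
  DK K (fun x => h * e1 x + h * e2 x) d = h * DK K e1 d + h * DK K e2 d.
Proof.
move=> H1 H2; case: (K0_cases d) => [Hi|[c [Hc c0]]].
  by rewrite !DK_inf // mule0 adde0.
have Ha : (0 <= (2:R)^-1 <= 1)%R by apply/andP; split; lra.
have := HA _ _ _ H1 H2 Ha.
have -> : (1 - (2:R)^-1 = 2^-1)%R by field.
move/(congr1 (fun f => f d)); rewrite -/h => Hmix.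
rewrite (DK_fin Hc) Hmix (K_decomp e1 Hc) (K_decomp e2 Hc).
rewrite !ge0_muleDr ?lee_fin ?DK_E //.
rewrite addeACA /h -EFinM -EFinD.
have -> : (2^-1 * c + 2^-1 * c = c)%R by field.
by rewrite addeK.
Qed.

Lemma DK_double (e : D -> \bar R) d : isE e -> DK K (fun x => 2%:E * e x) d = 2%:E * DK K e d.
Proof.
move=> H.
have := DK_half _ _ d (isE_double H) (@isE_zero R D).
have -> : (fun x => h * (2%:E * e x) + h * @zeroE R D x) = e.
  by apply: funext => x; rewrite h2 /zeroE mule0 adde0.
rewrite DK_zero /zeroE mule0 adde0 => ->.
by rewrite /h muleA -EFinM mulfV ?mul1e.
Qed.

Lemma DK_add (e1 e2 : D -> \bar R) d : isE e1 -> isE e2 ->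
  DK K (fun x => e1 x + e2 x) d = DK K e1 d + DK K e2 d.
Proof.
move=> H1 H2.
have := DK_half _ _ d (isE_double H1) (isE_double H2).
have -> : (fun x => h * (2%:E * e1 x) + h * (2%:E * e2 x)) = (fun x => e1 x + e2 x).
  by apply: funext => x; rewrite !h2.
by move=> ->; rewrite !DK_double // !h2.
Qed.

Lemma DK_mono (e1 e2 : D -> \bar R) d : isE e1 -> isE e2 -> (forall x, e1 x <= e2 x) ->
  DK K e1 d <= DK K e2 d.
Proof.
move=> H1 H2 H12.
pose z x := if e1 x == +oo then 0 else e2 x - e1 x.
have Hz : isE z.
  move=> x; rewrite /z; move: (H1 x) (H12 x); case: (e1 x) => [a| |] //= a0 le.
  by rewrite EFinN sube_ge0.
have -> : e2 = (fun x => e1 x + z x).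
  apply: funext => x; rewrite /z; move: (H1 x) (H12 x).
  case: (e1 x) => [a| |] //= a0 le.
    by rewrite EFinN addeC subeK.
  by rewrite adde0; move: le; rewrite leye_eq => /eqP.
rewrite DK_add // addeC; apply: lee_paddl => //; exact: DK_E Hz d.
Qed.

Lemma iter_E n e : isE e -> isE (iter n (DK K) e).
Proof. by elim: n => //= n IH He; apply: DK_E; apply: IH. Qed.

Lemma iter_add n (e1 e2 : D -> \bar R) : isE e1 -> isE e2 ->
  iter n (DK K) (fun x => e1 x + e2 x) =
  (fun x => iter n (DK K) e1 x + iter n (DK K) e2 x).
Proof.
move=> H1 H2; elim: n => //= n ->.
by apply: funext => d; rewrite DK_add //; apply: iter_E.
Qed.

Lemma iter_mono n (e1 e2 : D -> \bar R) d : isE e1 -> isE e2 ->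
  (forall x, e1 x <= e2 x) -> iter n (DK K) e1 d <= iter n (DK K) e2 d.
Proof.
move=> H1 H2 H12; elim: n d => //= n IH d.
by apply: DK_mono => //; apply: iter_E.
Qed.
End DKfacts.

Theorem theorem3p6 (R : realType) (D : Type)
  (K : (D -> \bar R) -> (D -> \bar R)) (u : D -> R) :
  (forall eta, isE eta -> isE (K eta)) ->
  affineE K ->
  (forall d, (0 <= u d)%R) ->
  (exists r : D -> R, ranking_supermartingale K u r) ->
  (forall d, ereal_inf [set (iter n (DK K) (fun x => (u x)%:E)) d | n in [set: nat]] = 0).
Proof.
move=> HE HA u0 [r [r0 Hr]] d.
set uE := fun x => (u x)%:E; set rE := fun x => (r x)%:E.
have HuE : isE uE by move=> x; rewrite /uE lee_fin.
have HrE : isE rE by move=> x; rewrite /rE lee_fin.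
have step n x : iter n (DK K) uE x + iter n.+1 (DK K) rE x <= iter n (DK K) rE x.
  rewrite iterSr.
  have := @iter_add _ _ K HE HA n _ _ HuE (@DK_E _ _ K HE HA _ HrE).
  move/(congr1 (fun f => f x)) => /= <-.
  apply: iter_mono => //.
    by move=> y; apply: adde_ge0 => //; apply: DK_E.
  by move=> y; rewrite addeC; apply: Hr.
set m := ereal_inf _.
have m0 : 0 <= m by apply/ereal_infP => y [n _ <-]; exact: iter_E.
have mle n : m <= iter n (DK K) uE d.
  by apply: ge_ereal_inf; exists (iter n (DK K) uE d) => //; exists n.
have := mle 0%N; move: m0.
case: m mle => [m'| |] //= mle.
rewrite lee_fin => m0 _.
have P n : (n%:R * m')%:E + iter n (DK K) rE d <= rE d.
  elim: n => [|n IH]; first by rewrite mul0r add0e.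
  rewrite -natr1 mulrDl mul1r EFinD -addeA.
  apply: le_trans IH; apply: leeD => //.
  apply: le_trans (step n d); apply: leeD => //.
have Q n : (n%:R * m' <= r d)%R.
  rewrite -lee_fin; apply: le_trans (P n).
  rewrite -[X in X <= _]adde0; apply: leeD => //.
  exact: iter_E.
suff -> : m' = 0%R by [].
apply/eqP; rewrite eq_le m0 andbT leNgt; apply/negP => mp.
have rp : (0 <= r d / m')%R by rewrite divr_ge0 // ltW.
have := archi_boundP rp.
rewrite ltr_pdivrMr // => H.
have := Q (Num.Def.archi_bound (r d / m')).
by rewrite leNgt H.
Qed.
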